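(* Let $P_1=(X_1,Y_1)\neq(0,0)$ be a rational point of the plane with $Y_1\neq 0$, let $O=(0,0)$, and put $N=X_1^2+Y_1^2$. A point $P=(X,Y)$ of the plane is a rational point lying on the perpendicular bisector of the segment $OP_1$ and at rational distance from $O$ (equivalently, $P$ is the apex of a triangle in $\mathcal R$) if and only if there exist $t\in\mathbb{Q}$ with $t^2N\neq 4$ and a sign $\varepsilon\in\{+1,-1\}$ such that $$X=\frac{X_1}{2}+\varepsilon\,\frac{t^2X_1N-4tN+4X_1}{2(t^2N-4)},\qquad Y=\frac{Y_1}{2}+\varepsilon\,\frac{X_1\bigl(4tN-t^2X_1N-4X_1\bigr)}{2Y_1(t^2N-4)} .$$ In that case $|OP|=|PP_1|=|R|$, where $$R=\frac{(tN-2X_1)^2+4Y_1^2}{2t^2Y_1N-8Y_1}.$$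
   Context: A rational point of the plane is a point with rational coordinates; a rational triangle is one whose three side lengths are rational. For a fixed rational point $P_1\neq O$, $\mathcal R$ denotes the set of rational isosceles triangles $\triangle OPP_1$ with base $OP_1$, with $P$ a rational point and $|OP|=|PP_1|$; such a triangle is determined by its apex $P$, which lies on the perpendicular bisector $y=-\frac{X_1}{Y_1}x+\frac{X_1^2+Y_1^2}{2Y_1}$ of $OP_1$. *)

(* Defs.v *)
(* Points of the plane have coordinates in an arbitrary
   real closed field R (e.g. the real algebraic numbers); "rational" means
   "in the image of the canonical embedding ratr : rat -> R". *)
From HB Require Import structures.
From mathcomp Require Import all_boot all_order all_algebra.
Set Implicit Arguments. Unset Strict Implicit. Unset Printing Implicit Defensive.
Import Order.TTheory GRing.Theory Num.Theory.
Local Open Scope ring_scope.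

Definition is_rat (R : rcfType) (x : R) : Prop := exists q : rat, x = ratr q.

Definition dist (R : rcfType) (a b c d : R) : R :=
  Num.sqrt ((a - c) ^+ 2 + (b - d) ^+ 2).

Definition Nval (X1 Y1 : rat) : rat := X1 ^+ 2 + Y1 ^+ 2.

Definition Xform (X1 Y1 t eps : rat) : rat :=
  let N := Nval X1 Y1 in
  X1 / 2 + eps * ((t ^+ 2 * X1 * N - 4 * t * N + 4 * X1) / (2 * (t ^+ 2 * N - 4))).

Definition Yform (X1 Y1 t eps : rat) : rat :=
  let N := Nval X1 Y1 in
  Y1 / 2 + eps * ((X1 * (4 * t * N - t ^+ 2 * X1 * N - 4 * X1))
                    / (2 * Y1 * (t ^+ 2 * N - 4))).

Definition Rform (X1 Y1 t : rat) : rat :=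
  let N := Nval X1 Y1 in
  ((t * N - 2 * X1) ^+ 2 + 4 * Y1 ^+ 2) / (2 * t ^+ 2 * Y1 * N - 8 * Y1).

(* Main.v *)
Require Import Defs.
From HB Require Import structures.
From mathcomp Require Import all_boot all_order all_algebra.
From mathcomp Require Import ring lra.
Import Order.TTheory GRing.Theory Num.Theory.
Local Open Scope ring_scope.

Lemma N_gt0 (X1 Y1 : rat) : Y1 != 0 -> 0 < Nval X1 Y1.
Proof.
move=> hY; rewrite /Nval; have h1 : 0 < Y1 ^+ 2 by rewrite exprn_even_gt0.
have h2 : 0 <= X1 ^+ 2 by apply: sqr_ge0.
lra.
Qed.

Lemma Dnz (X1 Y1 t u : rat) : Y1 != 0 ->
  2 * u * (t ^+ 2 * Nval X1 Y1 - 4) = t ^+ 2 * X1 * Nval X1 Y1 - 4 * t * Nval X1 Y1 + 4 * X1 ->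
  t ^+ 2 * Nval X1 Y1 != 4.
Proof.
move=> hY hA; apply/negP=> /eqP hD.
move: hA; rewrite hD subrr mulr0 => hA.
have htN : t * Nval X1 Y1 = 2 * X1.
  have : t ^+ 2 * X1 * Nval X1 Y1 = 4 * X1 by rewrite -mulrA (mulrC X1) mulrA hD.
  move=> e; lra.
have : (t * Nval X1 Y1) ^+ 2 = 4 * Nval X1 Y1.
  have -> : (t * Nval X1 Y1) ^+ 2 = Nval X1 Y1 * (t ^+ 2 * Nval X1 Y1) by ring.
  by rewrite hD mulrC.
rewrite htN /Nval => e.
have : Y1 ^+ 2 = 0 by lra.
by move/eqP; rewrite expf_eq0 /= (negbTE hY).
Qed.

Lemma exists_t (X1 Y1 x y q : rat) : Y1 != 0 ->
  y = - (X1 / Y1) * x + Nval X1 Y1 / (2 * Y1) -> q ^+ 2 = x ^+ 2 + y ^+ 2 ->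
  exists t, 2 * (x - X1 / 2) * (t ^+ 2 * Nval X1 Y1 - 4)
            = t ^+ 2 * X1 * Nval X1 Y1 - 4 * t * Nval X1 Y1 + 4 * X1.
Proof.
move=> hY hy hq.
have hN := N_gt0 X1 Y1 hY; have hN0 : Nval X1 Y1 != 0 by rewrite gt_eqF.
set N := Nval X1 Y1 in hN hN0 hy *.
have E : 4 * Y1 ^+ 2 * q ^+ 2 = N * (Y1 ^+ 2 + 4 * (x - X1 / 2) ^+ 2).
  rewrite hq hy /N /Nval; field; exact: hY.
have [hx|hx] := eqVneq x X1.
  exists (2 * X1 / N); rewrite hx; field; rewrite ?hN0 //.
have ha : N * (2 * x - 2 * X1) != 0.
  rewrite mulf_neq0 //; apply/negP=> /eqP e; move/eqP: hx; apply; lra.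
set a := N * (2 * x - 2 * X1) in ha.
exists ((- 2 * N + 4 * Y1 * q) / a).
set t := (- 2 * N + 4 * Y1 * q) / a.
have hs : a * t = - 2 * N + 4 * Y1 * q by rewrite /t; field.
have Q : a * (a * t ^+ 2 + 4 * N * t - 8 * x) = 0.
  have -> : a * (a * t ^+ 2 + 4 * N * t - 8 * x) = (a * t) ^+ 2 + 4 * N * (a * t) - 8 * x * a by ring.
  rewrite hs /a.
  have -> : (- 2 * N + 4 * Y1 * q) ^+ 2 + 4 * N * (- 2 * N + 4 * Y1 * q) - 8 * x * (N * (2 * x - 2 * X1))
     = 4 * Y1 ^+ 2 * q ^+ 2 * 4 - 4 * N * N - 8 * x * (N * (2 * x - 2 * X1)) by ring.
  rewrite E /N /Nval. by field.
move/eqP: Q; rewrite mulf_eq0 (negbTE ha) /= => /eqP Q.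
have -> : 2 * (x - X1 / 2) * (t ^+ 2 * N - 4) = (t ^+ 2 * X1 * N - 4 * t * N + 4 * X1) + (a * t ^+ 2 + 4 * N * t - 8 * x) by rewrite /a; field.
by rewrite Q addr0.
Qed.

Lemma forms1 (X1 Y1 x y t : rat) : Y1 != 0 ->
  y = - (X1 / Y1) * x + Nval X1 Y1 / (2 * Y1) ->
  2 * (x - X1 / 2) * (t ^+ 2 * Nval X1 Y1 - 4)
            = t ^+ 2 * X1 * Nval X1 Y1 - 4 * t * Nval X1 Y1 + 4 * X1 ->
  x = Xform X1 Y1 t 1 /\ y = Yform X1 Y1 t 1.
Proof.
move=> hY hy hA.
have hD := Dnz X1 Y1 t _ hY hA.
have hD' : t ^+ 2 * Nval X1 Y1 - 4 != 0 by rewrite subr_eq0.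
rewrite /Xform /Yform -hA; split.
  field; exact: hD'.
have -> : X1 * (4 * t * Nval X1 Y1 - t ^+ 2 * X1 * Nval X1 Y1 - 4 * X1)
   = - X1 * (2 * (x - X1 / 2) * (t ^+ 2 * Nval X1 Y1 - 4)) by rewrite hA; ring.
rewrite hy /Nval; field.
by rewrite hY andbT; move: hD'; rewrite /Nval.
Qed.

Lemma forms2 (X1 Y1 t eps : rat) : Y1 != 0 -> (eps = 1 \/ eps = -1) ->
  t ^+ 2 * Nval X1 Y1 != 4 ->
  [/\ Yform X1 Y1 t eps = - (X1 / Y1) * Xform X1 Y1 t eps + Nval X1 Y1 / (2 * Y1),
      Xform X1 Y1 t eps ^+ 2 + Yform X1 Y1 t eps ^+ 2 = Rform X1 Y1 t ^+ 2 &
      (Xform X1 Y1 t eps - X1) ^+ 2 + (Yform X1 Y1 t eps - Y1) ^+ 2 = Rform X1 Y1 t ^+ 2].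
Proof.
move=> hY he hD.
have hD' : t ^+ 2 * Nval X1 Y1 - 4 != 0 by rewrite subr_eq0.
have hR : 2 * t ^+ 2 * Y1 * Nval X1 Y1 - 8 * Y1 != 0.
  have -> : 2 * t ^+ 2 * Y1 * Nval X1 Y1 - 8 * Y1 = 2 * Y1 * (t ^+ 2 * Nval X1 Y1 - 4) by ring.
  by rewrite !mulf_neq0.
move: hD' hR; rewrite /Xform /Yform /Rform /Nval => hD' hR.
case: he => ->; split; field; rewrite ?hY ?hD' ?hR //.
Qed.

Lemma dist_rat (R : rcfType) (a b c d : rat) :
  dist (ratr a : R) (ratr b) (ratr c) (ratr d) = Num.sqrt (ratr ((a - c) ^+ 2 + (b - d) ^+ 2)).
Proof. by rewrite /dist rmorphD /= !rmorphXn /= !rmorphB. Qed.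

Lemma ratr_injR (R : rcfType) : injective (@ratr R).
Proof. exact: fmorph_inj. Qed.

Lemma ratr_line (R : rcfType) (a b c n : rat) :
  ratr (- (a / b) * c + n / (2 * b)) = - (ratr a / ratr b) * ratr c + ratr n / (2 * ratr b) :> R.
Proof.
rewrite rmorphD /= rmorphM /= rmorphN /= !fmorph_div /= rmorphM /=.
by rewrite (rmorph_nat _ 2).
Qed.

Theorem proposition1 (R : rcfType) (X1 Y1 : rat)
  (hP1 : (X1, Y1) != (0, 0)) (hY1 : Y1 != 0) :
  (forall X Y : R,
     (is_rat X /\ is_rat Y
      /\ Y = - (ratr X1 / ratr Y1) * X + ratr (Nval X1 Y1) / (2 * ratr Y1)
      /\ is_rat (dist X Y 0 0))
     <->
     (exists t eps : rat, (eps = 1 \/ eps = -1)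
        /\ t ^+ 2 * Nval X1 Y1 != 4
        /\ X = ratr (Xform X1 Y1 t eps) /\ Y = ratr (Yform X1 Y1 t eps)))
  /\
  (forall (t eps : rat) (X Y : R), (eps = 1 \/ eps = -1) ->
     t ^+ 2 * Nval X1 Y1 != 4 ->
     X = ratr (Xform X1 Y1 t eps) -> Y = ratr (Yform X1 Y1 t eps) ->
     dist X Y 0 0 = `|ratr (Rform X1 Y1 t)|
     /\ dist X Y (ratr X1) (ratr Y1) = `|ratr (Rform X1 Y1 t)|).
Proof.
have P2 : forall (t eps : rat) (X Y : R), (eps = 1 \/ eps = -1) ->
     t ^+ 2 * Nval X1 Y1 != 4 ->
     X = ratr (Xform X1 Y1 t eps) -> Y = ratr (Yform X1 Y1 t eps) ->
     dist X Y 0 0 = `|ratr (Rform X1 Y1 t)|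
     /\ dist X Y (ratr X1) (ratr Y1) = `|ratr (Rform X1 Y1 t)|.
  move=> t eps X Y he hD -> ->.
  have [_ E1 E2] := forms2 X1 Y1 t eps hY1 he hD.
  rewrite -(rmorph0 (ratr : {rmorphism rat -> R})) !dist_rat !subr0 E1 E2.
  by rewrite rmorphXn /= sqrtr_sqr.
split=> // X Y; split.
  move=> [[x ->] [[y ->] [hl [q hq]]]].
  have hy : y = - (X1 / Y1) * x + Nval X1 Y1 / (2 * Y1).
    apply: (@ratr_injR R).
    by rewrite hl ratr_line.
  have hq2 : q ^+ 2 = x ^+ 2 + y ^+ 2.
    move: hq; rewrite -(rmorph0 (ratr : {rmorphism rat -> R})) dist_rat !subr0 => hq.
    have q0 : 0 <= (ratr q : R) by rewrite -hq sqrtr_ge0.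
    apply: (@ratr_injR R).
    rewrite rmorphXn /= -hq sqr_sqrtr // ler0q.
    by rewrite addr_ge0 // sqr_ge0.
  have [t ht] := exists_t X1 Y1 x y q hY1 hy hq2.
  have [-> ->] := forms1 X1 Y1 x y t hY1 hy ht.
  exists t, 1; split; first by left.
  by split=> //; exact: (Dnz X1 Y1 t _ hY1 ht).
move=> [t [eps [he [hD [-> ->]]]]].
have [E0 _ _] := forms2 X1 Y1 t eps hY1 he hD.
have [D1 _] := P2 t eps _ _ he hD erefl erefl.
split; first by exists (Xform X1 Y1 t eps).
split; first by exists (Yform X1 Y1 t eps).
split.
  by rewrite E0 ratr_line.
by rewrite D1; exists `|Rform X1 Y1 t|; rewrite ratr_norm.
Qed.
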